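(* Let $k$ be an odd positive integer and suppose $$k^2=a^2+b^2+c^2=a'^2+b'^2+c'^2$$ are two different representations with integers $a,b,c,a',b',c'$, $\gcd(a,b,c,a',b',c')=1$, $c'>c$, and $a,a'$ both odd. Set $$\Delta_{12}=\tfrac{a'-a}{2},\ \Delta_{34}=\tfrac{a+a'}{2},\ \Delta_{13}=-\tfrac{b'-b}{2},\ \Delta_{24}=\tfrac{b+b'}{2},\ \Delta_{14}=\tfrac{c+c'}{2},\ \Delta_{23}=\tfrac{c'-c}{2}.$$ Then these are integers satisfying $$\Delta_{12}\Delta_{34}-\Delta_{13}\Delta_{24}+\Delta_{14}\Delta_{23}=0$$ and $$k^2=(\Delta_{12}\pm \Delta_{34})^2+(\Delta_{13}\mp\Delta_{24})^2+(\Delta_{14}\pm\Delta_{23})^2$$ (for both choices of signs). Moreover, the set $\mathcal S$ of all $[u,v,w,t]\in\mathbb{Z}^4$ with $$\Delta_{34}v+\Delta_{24}w+\Delta_{23}t=0,\qquad \Delta_{23}u+\Delta_{13}v+\Delta_{12}w=0$$ is a two-dimensional lattice that contains a family of lattice squares, i.e. there exist nonzero vectors $X,Y\in\mathcal S$ with $X\cdot Y=0$ and $X\cdot X=Y\cdot Y$.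
   Context: $\cdot$ denotes the standard dot product on $\mathbb{R}^4$. *)

(* Defs.v *)
From Stdlib Require Import ZArith.
Open Scope Z_scope.

Definition vec4 : Type := (Z * Z * Z * Z)%type.

Definition v4 (u v w t : Z) : vec4 := (u, v, w, t).

Definition dot4 (x y : vec4) : Z :=
  let '(x1, x2, x3, x4) := x in
  let '(y1, y2, y3, y4) := y in
  x1 * y1 + x2 * y2 + x3 * y3 + x4 * y4.

Definition add4 (x y : vec4) : vec4 :=
  let '(x1, x2, x3, x4) := x in
  let '(y1, y2, y3, y4) := y in
  (x1 + y1, x2 + y2, x3 + y3, x4 + y4).

Definition scale4 (m : Z) (x : vec4) : vec4 :=
  let '(x1, x2, x3, x4) := x in
  (m * x1, m * x2, m * x3, m * x4).

Definition zero4 : vec4 := (0, 0, 0, 0).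

Definition gcd6 (a b c a' b' c' : Z) : Z :=
  Z.gcd a (Z.gcd b (Z.gcd c (Z.gcd a' (Z.gcd b' c')))).

Definition inS (D12 D34 D13 D24 D23 : Z) (x : vec4) : Prop :=
  let '(u, v, w, t) := x in
  D34 * v + D24 * w + D23 * t = 0 /\ D23 * u + D13 * v + D12 * w = 0.

Definition two_dim_lattice (L : vec4 -> Prop) : Prop :=
  exists e1 e2 : vec4,
    L e1 /\ L e2 /\
    (forall m n : Z, add4 (scale4 m e1) (scale4 n e2) = zero4 -> m = 0 /\ n = 0) /\
    (forall x : vec4, L x <-> exists m n : Z, x = add4 (scale4 m e1) (scale4 n e2)).

(* Main.v *)
Require Import Defs.
From Stdlib Require Import ZArith Lia Classical.
Open Scope Z_scope.

Lemma Zsub_gen (H : Z -> Prop) :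
  (forall x y, H x -> H y -> H (x + y)) -> (forall m x, H x -> H (m * x)) ->
  forall d, 0 < d -> H d -> exists g, 0 < g /\ H g /\ forall x, H x -> exists m, x = m * g.
Proof.
  intros Hadd Hsc d Hd Hhd.
  assert (Hmin : forall n : nat, forall x, 0 < x <= Z.of_nat n -> H x ->
     exists g, 0 < g /\ H g /\ forall y, H y -> 0 < y -> g <= y).
  { induction n; intros x Hx Hhx.
    - simpl in Hx; lia.
    - destruct (classic (exists y, H y /\ 0 < y < x)) as [[y [Hy1 Hy2]]|Hno].
      + apply (IHn y); [lia|auto].
      + exists x; split; [lia|split; auto].
        intros y Hy Hy0. destruct (Z_lt_le_dec y x) as [l|l]; [|lia].
        exfalso; apply Hno; eauto. }
  destruct (Hmin (Z.to_nat d) d) as [g [g0 [Hg Hgmin]]]; [lia|auto|].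
  exists g; split; [|split]; auto.
  intros x Hx. exists (x / g).
  assert (Hr : H (x mod g)).
  { rewrite Z.mod_eq by lia.
    replace (x - g * (x / g)) with (x + (-(x / g)) * g) by ring.
    apply Hadd; auto. }
  pose proof (Z.mod_pos_bound x g g0) as Hb.
  assert (x mod g = 0).
  { destruct (Z.eq_dec (x mod g) 0) as [e|e]; auto.
    specialize (Hgmin _ Hr ltac:(lia)). lia. }
  pose proof (Z.div_mod x g ltac:(lia)) as Hdm.
  rewrite H0, Z.add_0_r, Z.mul_comm in Hdm. exact Hdm.
Qed.

Section S.
Variables D12 D34 D13 D24 D23 : Z.

Lemma inS_add x y : inS D12 D34 D13 D24 D23 x -> inS D12 D34 D13 D24 D23 y ->
  inS D12 D34 D13 D24 D23 (add4 x y).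
Proof.
  destruct x as [[[x1 x2] x3] x4]; destruct y as [[[y1 y2] y3] y4]; simpl.
  intros [A B] [C E]; split; lia.
Qed.

Lemma inS_scale m x : inS D12 D34 D13 D24 D23 x -> inS D12 D34 D13 D24 D23 (scale4 m x).
Proof.
  destruct x as [[[x1 x2] x3] x4]; simpl.
  intros [A B]; split.
  - transitivity (m * (D34 * x2 + D24 * x3 + D23 * x4)); [ring|rewrite A; ring].
  - transitivity (m * (D23 * x1 + D13 * x2 + D12 * x3)); [ring|rewrite B; ring].
Qed.

Lemma lattice : 0 < D23 -> two_dim_lattice (inS D12 D34 D13 D24 D23).
Proof.
  intros Hd.
  set (HA := fun v => exists w u t, inS D12 D34 D13 D24 D23 (u, v, w, t)).
  set (HB := fun w => exists u t, inS D12 D34 D13 D24 D23 (u, 0, w, t)).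
  destruct (Zsub_gen HA) with (d := D23) as [g [g0 [[w0 [u1 [t1 He1]]] HgA]]].
  { intros x y [w [u [t Hx]]] [w' [u' [t' Hy]]].
    exists (w + w'), (u + u'), (t + t'). exact (inS_add _ _ Hx Hy). }
  { intros m x [w [u [t Hx]]]. exists (m * w), (m * u), (m * t).
    exact (inS_scale m _ Hx). }
  { exact Hd. }
  { exists 0, (- D13), (- D34). simpl; split; ring. }
  destruct (Zsub_gen HB) with (d := D23) as [h [h0 [[u2 [t2 He2]] HhB]]].
  { intros x y [u [t Hx]] [u' [t' Hy]].
    exists (u + u'), (t + t'). exact (inS_add _ _ Hx Hy). }
  { intros m x [u [t Hx]]. exists (m * u), (m * t).
    pose proof (inS_scale m _ Hx) as Hs. simpl in Hs. rewrite Z.mul_0_r in Hs. exact Hs. }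
  { exact Hd. }
  { exists (- D12), (- D24). simpl; split; ring. }
  exists (u1, g, w0, t1), (u2, 0, h, t2).
  split; [exact He1|split; [exact He2|split]].
  - intros m n E. simpl in E. injection E. intros E4 E3 E2 E1.
    assert (m = 0) by nia. subst m. split; [reflexivity|nia].
  - intros x; split.
    + destruct x as [[[u v] w] t]. intros Hx.
      destruct (HgA v) as [m Hm]; [exists w, u, t; exact Hx|].
      assert (Hx2 := inS_add _ _ Hx (inS_scale (- m) _ He1)).
      simpl in Hx2.
      replace (v + - m * g) with 0 in Hx2 by lia.
      destruct (HhB (w + - m * w0)) as [n Hn]; [exists (u + - m * u1), (t + - m * t1); exact Hx2|].
      exists m, n.
      simpl in Hx, He1, He2. destruct Hx as [X1 X2]. destruct He1 as [A1 A2]. destruct He2 as [B1 B2].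
      assert (T : D23 * (t - m * t1 - n * t2) = 0).
      { assert (Hw : w = m * w0 + n * h) by lia.
        subst v w.
        transitivity ((D34 * (m * g) + D24 * (m * w0 + n * h) + D23 * t)
                       - m * (D34 * g + D24 * w0 + D23 * t1) - n * (D34 * 0 + D24 * h + D23 * t2)); [ring|].
        rewrite X1, A1, B1; ring. }
      assert (U : D23 * (u - m * u1 - n * u2) = 0).
      { assert (Hw : w = m * w0 + n * h) by lia.
        subst v w.
        transitivity ((D23 * u + D13 * (m * g) + D12 * (m * w0 + n * h))
                       - m * (D23 * u1 + D13 * g + D12 * w0) - n * (D23 * u2 + D13 * 0 + D12 * h)); [ring|].
        rewrite X2, A2, B2; ring. }
      apply Z.mul_eq_0 in T; apply Z.mul_eq_0 in U.
      simpl. f_equal; [f_equal; [f_equal|]|]; lia.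
    + intros [m [n E]]. subst x. apply inS_add; apply inS_scale; assumption.
Qed.

Lemma squares k D14 : 0 < D23 -> 0 < k ->
  D12 * D34 - D13 * D24 + D14 * D23 = 0 ->
  k ^ 2 = D12^2 + D34^2 + D13^2 + D24^2 + D14^2 + D23^2 ->
  exists X Y : vec4,
     inS D12 D34 D13 D24 D23 X /\ inS D12 D34 D13 D24 D23 Y /\
     X <> zero4 /\ Y <> zero4 /\
     dot4 X Y = 0 /\ dot4 X X = dot4 Y Y.
Proof.
  intros Hd Hk Pl Hs.
  set (N := D13 * D13 + D23 * D23 + D34 * D34).
  exists (k * - D13, k * D23, 0, k * - D34),
    (D12 * D23 - D14 * D34, D12 * D13 + D24 * D34, - N, D14 * D13 + D24 * D23).
  unfold N; simpl.
  split; [split; ring|].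
  split; [split|].
  { transitivity (D13 * (D34 * D12 - D24 * D13 + D23 * D14)); [ring|].
    replace (D34 * D12 - D24 * D13 + D23 * D14) with 0 by lia; ring. }
  { transitivity (- D34 * (D12 * D34 - D13 * D24 + D14 * D23)); [ring|].
    rewrite Pl; ring. }
  split; [intro E; injection E; intros; nia|].
  split; [intro E; injection E; intros; nia|].
  split; [ring|].
  transitivity (k^2 * (D13 ^ 2 + D23 ^ 2 + D34 ^ 2)); [ring|].
  rewrite Hs.
  transitivity ((D13 ^ 2 + D23 ^ 2 + D34 ^ 2) ^ 2 +
     (D13 ^ 2 + D23 ^ 2 + D34 ^ 2) * (D12 ^ 2 + D14 ^ 2 + D24 ^ 2)); [ring|].
  transitivity ((D13 ^ 2 + D23 ^ 2 + D34 ^ 2) ^ 2 +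
     (D13 ^ 2 + D23 ^ 2 + D34 ^ 2) * (D12 ^ 2 + D14 ^ 2 + D24 ^ 2)
     - (D12 * D34 - D13 * D24 + D14 * D23) ^ 2); [rewrite Pl; ring|].
  ring.
Qed.
End S.

Lemma parity k a b c : Z.Odd k -> Z.Odd a -> k ^ 2 = a ^ 2 + b ^ 2 + c ^ 2 ->
  Z.Even b /\ Z.Even c.
Proof.
  intros [m Hm] [n Hn] E. subst k a.
  destruct (Z.Even_or_Odd b) as [[p Hp]|[p Hp]];
  destruct (Z.Even_or_Odd c) as [[q Hq]|[q Hq]]; subst b c.
  - split; [exists p|exists q]; reflexivity.
  - exfalso. assert (4 * (m*m + m - n*n - n - p*p - q*q - q) = 1) by lia. lia.
  - exfalso. assert (4 * (m*m + m - n*n - n - p*p - p - q*q) = 1) by lia. lia.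
  - exfalso. assert (4 * (m*m + m - n*n - n - p*p - p - q*q - q) = 2) by lia. lia.
Qed.

Lemma main_abs (k n n' p p' q q' D12 D34 D13 D24 D14 D23 : Z) :
  0 < k ->
  k ^ 2 = (2 * n + 1) ^ 2 + (2 * p) ^ 2 + (2 * q) ^ 2 ->
  k ^ 2 = (2 * n' + 1) ^ 2 + (2 * p') ^ 2 + (2 * q') ^ 2 ->
  2 * q' > 2 * q ->
  D12 = n' - n -> D34 = n + n' + 1 -> D13 = - (p' - p) -> D24 = p + p' ->
  D14 = q + q' -> D23 = q' - q ->
  ((2 | 2 * n' + 1 - (2 * n + 1)) /\ (2 | 2 * n + 1 + (2 * n' + 1)) /\
   (2 | 2 * p' - 2 * p) /\ (2 | 2 * p + 2 * p') /\
   (2 | 2 * q + 2 * q') /\ (2 | 2 * q' - 2 * q)) /\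
  D12 * D34 - D13 * D24 + D14 * D23 = 0 /\
  k ^ 2 = (D12 + D34) ^ 2 + (D13 - D24) ^ 2 + (D14 + D23) ^ 2 /\
  k ^ 2 = (D12 - D34) ^ 2 + (D13 + D24) ^ 2 + (D14 - D23) ^ 2 /\
  two_dim_lattice (inS D12 D34 D13 D24 D23) /\
  (exists X Y : vec4,
     inS D12 D34 D13 D24 D23 X /\ inS D12 D34 D13 D24 D23 Y /\
     X <> zero4 /\ Y <> zero4 /\
     dot4 X Y = 0 /\ dot4 X X = dot4 Y Y).
Proof.
  intros Hk E1 E2 Hc F12 F34 F13 F24 F14 F23.
  assert (Pl : D12 * D34 - D13 * D24 + D14 * D23 = 0).
  { subst.
    assert (H4 : 4 * ((n' - n) * (n + n' + 1) - - (p' - p) * (p + p') + (q + q') * (q' - q))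
       = ((2 * n' + 1) ^ 2 + (2 * p') ^ 2 + (2 * q') ^ 2) - ((2 * n + 1) ^ 2 + (2 * p) ^ 2 + (2 * q) ^ 2)) by ring.
    rewrite <- E1, <- E2, Z.sub_diag in H4. clear -H4; lia. }
  assert (S1 : k ^ 2 = (D12 + D34) ^ 2 + (D13 - D24) ^ 2 + (D14 + D23) ^ 2).
  { rewrite E2. subst. ring. }
  assert (S2 : k ^ 2 = (D12 - D34) ^ 2 + (D13 + D24) ^ 2 + (D14 - D23) ^ 2).
  { rewrite E1. subst. ring. }
  assert (Hd : 0 < D23) by (clear -Hc F23; lia).
  split.
  { repeat split.
    - exists (n' - n); ring.
    - exists (n + n' + 1); ring.
    - exists (p' - p); ring.
    - exists (p + p'); ring.
    - exists (q + q'); ring.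
    - exists (q' - q); ring. }
  split; [exact Pl|].
  split; [exact S1|].
  split; [exact S2|].
  split; [apply lattice; exact Hd|].
  apply (squares D12 D34 D13 D24 D23 k D14 Hd Hk Pl).
  transitivity (((D12 + D34) ^ 2 + (D13 - D24) ^ 2 + (D14 + D23) ^ 2
     + ((D12 - D34) ^ 2 + (D13 + D24) ^ 2 + (D14 - D23) ^ 2)) / 2).
  - rewrite <- S1, <- S2. replace (k ^ 2 + k ^ 2) with (k ^ 2 * 2) by ring.
    rewrite Z.div_mul; [reflexivity|discriminate].
  - replace ((D12 + D34) ^ 2 + (D13 - D24) ^ 2 + (D14 + D23) ^ 2
     + ((D12 - D34) ^ 2 + (D13 + D24) ^ 2 + (D14 - D23) ^ 2))
     with ((D12^2 + D34^2 + D13^2 + D24^2 + D14^2 + D23^2) * 2) by ring.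
    rewrite Z.div_mul; [reflexivity|discriminate].
Qed.

Theorem theorem2p8 (k a b c a' b' c' : Z) :
  0 < k -> Z.Odd k ->
  k ^ 2 = a ^ 2 + b ^ 2 + c ^ 2 ->
  k ^ 2 = a' ^ 2 + b' ^ 2 + c' ^ 2 ->
  (a, b, c) <> (a', b', c') ->
  gcd6 a b c a' b' c' = 1 ->
  c' > c ->
  Z.Odd a -> Z.Odd a' ->
  let D12 := (a' - a) / 2 in
  let D34 := (a + a') / 2 in
  let D13 := - ((b' - b) / 2) in
  let D24 := (b + b') / 2 in
  let D14 := (c + c') / 2 in
  let D23 := (c' - c) / 2 in
  (* the Delta's are integers: the halved quantities are even *)
  ((2 | a' - a) /\ (2 | a + a') /\ (2 | b' - b) /\ (2 | b + b') /\
   (2 | c + c') /\ (2 | c' - c)) /\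
  D12 * D34 - D13 * D24 + D14 * D23 = 0 /\
  k ^ 2 = (D12 + D34) ^ 2 + (D13 - D24) ^ 2 + (D14 + D23) ^ 2 /\
  k ^ 2 = (D12 - D34) ^ 2 + (D13 + D24) ^ 2 + (D14 - D23) ^ 2 /\
  two_dim_lattice (inS D12 D34 D13 D24 D23) /\
  (exists X Y : vec4,
     inS D12 D34 D13 D24 D23 X /\ inS D12 D34 D13 D24 D23 Y /\
     X <> zero4 /\ Y <> zero4 /\
     dot4 X Y = 0 /\ dot4 X X = dot4 Y Y).
Proof.
  intros Hk Hko E1 E2 Hne Hg Hc Ha Ha'.
  destruct (parity _ _ _ _ Hko Ha E1) as [[p Hp] [q Hq]].
  destruct (parity _ _ _ _ Hko Ha' E2) as [[p' Hp'] [q' Hq']].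
  destruct Ha as [n Hn]; destruct Ha' as [n' Hn'].
  subst a a' b b' c c'.
  intros D12 D34 D13 D24 D14 D23.
  assert (F12 : D12 = n' - n).
  { unfold D12. replace (2 * n' + 1 - (2 * n + 1)) with ((n' - n) * 2) by ring.
    apply Z.div_mul; lia. }
  assert (F34 : D34 = n + n' + 1).
  { unfold D34. replace (2 * n + 1 + (2 * n' + 1)) with ((n + n' + 1) * 2) by ring.
    apply Z.div_mul; lia. }
  assert (F13 : D13 = - (p' - p)).
  { unfold D13. replace (2 * p' - 2 * p) with ((p' - p) * 2) by ring.
    rewrite Z.div_mul; lia. }
  assert (F24 : D24 = p + p').
  { unfold D24. replace (2 * p + 2 * p') with ((p + p') * 2) by ring.
    apply Z.div_mul; lia. }
  assert (F14 : D14 = q + q').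
  { unfold D14. replace (2 * q + 2 * q') with ((q + q') * 2) by ring.
    apply Z.div_mul; lia. }
  assert (F23 : D23 = q' - q).
  { unfold D23. replace (2 * q' - 2 * q) with ((q' - q) * 2) by ring.
    apply Z.div_mul; lia. }
  apply (main_abs k n n' p p' q q' D12 D34 D13 D24 D14 D23); assumption.
Qed.
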